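(* Let $\Upsilon$ be a bundle that is a run of the protocol $\Pi$ and is compatible with $\leadsto$. For all strands $z_0,z_1$, all messages $t,t_0,t_1$, all states $m_0,m_1$ and all keys $esk_0,esk_1,k_0,k_1$: if $\mathrm{htin}(z_0,2,\mathrm{extend}(esk_0,k_0,\mathrm{pcr}(m_0),t_0))$, $\mathrm{htin}(z_1,2,\mathrm{extend}(esk_1,k_1,\mathrm{pcr}(m_1),t_1))$, $(z_0,1)\prec(z_1,0)$, and $m_1$ has $t$, then either $\mathrm{ex}(t_0,m_0)$ is a subterm of $m_1$, or there exist a strand $z$, a state $m$ and keys $esk,k$ such that $\mathrm{htin}(z,2,\mathrm{extend}(esk,k,\mathrm{pcr}(m),t))$, $(z_0,1)\prec(z,0)$ and $(z,1)\prec(z_1,0)$.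
   Context: Messages are terms of a free order-sorted algebra with atom sorts $\mathsf{A}$ (asymmetric keys), $\mathsf{S}$ (symmetric keys), $\mathsf{D}$, $\mathsf{E}$, tag constants $g_0,g_1,\dots$, pairing $(\cdot,\cdot)$, encryption $\{t\}_k$, hashing $\#(t)$ (of sort $\mathsf{S}$), and key inverse (asymmetric $a_i^{-1}=b_i$, symmetric keys self-inverse); $s_0$ is a fixed symmetric-key constant. TPM states are terms generated by $\mathrm{bt}$ and $\mathrm{ex}(t,m)$ ($t$ a message, $m$ a state). $\mathrm{pcr}$ maps states to messages: $\mathrm{pcr}(\mathrm{bt})=s_0$, $\mathrm{pcr}(\mathrm{ex}(t,m))=\#(t,\mathrm{pcr}(m))$; $\mathrm{pcr}$ is assumed injective. The transition relation: $m_0\leadsto m_1$ iff $m_1=\mathrm{bt}$, or $m_1=\mathrm{ex}(t,m_0)$ for some $t$, or $m_0=m_1$. A path is $\pi:\mathbb{N}\to$ states with $\pi(0)=\mathrm{bt}$ and $\pi(i)\leadsto\pi(i+1)$. A state $m$ has $t$ if some $\mathrm{ex}(t,m')$ is a subterm of $m$; state $m$ is a subterm of $m'$ if $m'=\mathrm{ex}(t_1,\dots\mathrm{ex}(t_r,m)\dots)$, $r\ge0$. Strand spaces: a trace is a finite sequence of events $+t$ (transmit) or $-t$ (receive). A strand space $\Theta$ maps strands to traces; nodes are $(s,i)$ with $0\le i<|\Theta(s)|$. A bundle $(\Theta,\to)$ is a finite acyclic graph on the nodes whose edges are communication edges $n_0\to n_1$ (with $n_0$ transmitting and $n_1$ receiving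 the same message, every reception having exactly one incoming such edge) and strand-succession edges $(s,i)\Rightarrow(s,i+1)$; $\prec$ is the transitive closure of $\to\cup\Rightarrow$. A bundle is a run of $\Pi$ if each strand's trace is a prefix of some trace of some role of $\Pi$ (the adversary roles create/tag/pair/separate/encrypt/decrypt/hash, the TPM roles boot, extend, quote, decrypt, createkey, and Alice's role). $\mathrm{htin}(z,h,c)$ means strand $z$ has at least $h$ events and its trace is a prefix of $c$. Here, following the paper's abbreviation, $\mathrm{extend}(esk,k,p,t)$ denotes the state-bearing portion of the TPM extend role, the trace $-\{g_0,p\}_{\#k}\Rightarrow+\{g_0,\#(t,p)\}_{\#k}$, so $(z,0)$ receives the incoming state and $(z,1)$ transmits the outgoing state. Annotations: in each TPM role with a state-bearing pair $-\{g_0,p_0\}_{\#k}\Rightarrow+\{g_0,p_1\}_{\#k}$ (extend: $p_1=\#(t,p_0)$; boot: $p_1=s_0$; quote and decrypt: $p_1=p_0$), the transmission is annotated with $\{(m_0,m_1)\mid p_0=\mathrm{pcr}(m_0),\ p_1=\mathrm{pcr}(m_1)\}\cap\leadsto$; no other events are annotated, and a node annotated by the extend role is an instance of no other role. A bundle $\Upsilon$ is compatible with $\leadsto$ if there exist $\ell\in\mathbb{N}$, a bijection $f$ from the annotated nodes of $\Upsilon$ to $\{0,\dots,\ell-1\}$, and a path $\pi$ such that $n_0\prec n_1\iff f(n_0)<f(n_1)$ for annotated nodes, and every annotated node $n$ with annotation $a$ satisfies $(\pi(f(n)),\pi(f(n)+1))\in a$. *)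

(* Defs.v *)
From Stdlib Require Import List Arith Relations.
Import ListNotations.

(* Atoms: sort A (asymmetric keys a_i (false) and b_i = a_i^{-1} (true)),
   sort S (symmetric keys; s0 := AtS 0), sorts D and E; tags g_n;
   pairing, encryption {t}_k, hashing #t (of sort S). *)
Inductive msg : Type :=
| AtA : nat -> bool -> msg
| AtS : nat -> msg
| AtD : nat -> msg
| AtE : nat -> msg
| Tag : nat -> msg
| Pair : msg -> msg -> msg
| Enc : msg -> msg -> msg        (* Enc t k = {t}_k *)
| Hash : msg -> msg.

Definition s0 : msg := AtS 0.

(* messages of a key sort (A or S; hashes have sort S) *)
Definition is_key (k : msg) : Prop :=
  match k with AtA _ _ | AtS _ | Hash _ => True | _ => False end.

Definition is_atom (a : msg) : Prop :=
  match a with AtA _ _ | AtS _ | AtD _ | AtE _ => True | _ => False end.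

Definition inv (k : msg) : msg :=
  match k with AtA n b => AtA n (negb b) | _ => k end.

Inductive state : Type :=
| bt : state
| ex : msg -> state -> state.

Fixpoint pcr (m : state) : msg :=
  match m with
  | bt => s0
  | ex t m' => Hash (Pair t (pcr m'))
  end.

Inductive state_sub (m : state) : state -> Prop :=
| sub_refl : state_sub m m
| sub_ex : forall t m', state_sub m m' -> state_sub m (ex t m').

Definition has_msg (m : state) (t : msg) : Prop :=
  exists m', state_sub (ex t m') m.

Definition leadsto (m0 m1 : state) : Prop :=
  m1 = bt \/ (exists t, m1 = ex t m0) \/ m0 = m1.

Definition is_path (pi : nat -> state) : Prop :=
  pi 0 = bt /\ forall i, leadsto (pi i) (pi (S i)).

Inductive event : Type :=
| Snd : msg -> event
| Rcv : msg -> event.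

Definition trace := list event.

Definition prefix (l c : trace) : Prop := exists r, c = l ++ r.

Definition strand := nat.
Definition node := (strand * nat)%type.

Record bundle := {
  Theta : strand -> trace;
  comm : node -> node -> Prop
}.

Definition ev (B : bundle) (n : node) : option event :=
  nth_error (Theta B (fst n)) (snd n).

Definition is_node (B : bundle) (n : node) : Prop :=
  snd n < length (Theta B (fst n)).

Definition succ_edge (B : bundle) (n0 n1 : node) : Prop :=
  fst n1 = fst n0 /\ snd n1 = S (snd n0) /\ is_node B n1.

Definition prec (B : bundle) : node -> node -> Prop :=
  clos_trans node (fun a b => comm B a b \/ succ_edge B a b).

Definition is_bundle (B : bundle) : Prop :=
  (* finitely many (nonempty) strands, hence finitely many nodes *)
  (exists l : list strand, forall s, Theta B s <> [] -> In s l) /\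
  (forall n0 n1, comm B n0 n1 ->
     exists t, ev B n0 = Some (Snd t) /\ ev B n1 = Some (Rcv t)) /\
  (forall n1 t, ev B n1 = Some (Rcv t) ->
     exists n0, comm B n0 n1 /\ forall n0', comm B n0' n1 -> n0' = n0) /\
  (forall n, ~ prec B n n).

(* A role instance: a trace together with its (at most one) annotated
   state-bearing pair: rstate = Some (i, p0, p1) means events i-1, i are
   -{g0,p0}_{#k} => +{g0,p1}_{#k} and event i is annotated. *)
Record role := mkrole {
  rtrace : trace;
  rstate : option (nat * msg * msg)
}.

Definition st_msg (p k : msg) : msg := Enc (Pair (Tag 0) p) (Hash k).

(* the state-bearing portion of the TPM extend role (paper's abbreviation) *)
Definition extend (esk k p t : msg) : trace :=
  [Rcv (st_msg p k); Snd (st_msg (Hash (Pair t p)) k)].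

Definition extend_role (esk k p t : msg) : role :=
  mkrole (extend esk k p t) (Some (1, p, Hash (Pair t p))).

Inductive adversary_role : role -> Prop :=
| adv_create : forall a, is_atom a -> adversary_role (mkrole [Snd a] None)
| adv_tag : forall n, adversary_role (mkrole [Snd (Tag n)] None)
| adv_pair : forall a b, adversary_role (mkrole [Rcv a; Rcv b; Snd (Pair a b)] None)
| adv_sep : forall a b, adversary_role (mkrole [Rcv (Pair a b); Snd a; Snd b] None)
| adv_enc : forall t k, is_key k ->
    adversary_role (mkrole [Rcv k; Rcv t; Snd (Enc t k)] None)
| adv_dec : forall t k, is_key k ->
    adversary_role (mkrole [Rcv (Enc t k); Rcv (inv k); Snd t] None)
| adv_hash : forall t, adversary_role (mkrole [Rcv t; Snd (Hash t)] None).

(* Shape of every annotated role of the protocol: TPM boot (p1 = s0),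
   quote/decrypt (p1 = p0), or extend (p1 = #(t,p0)). *)
Definition role_ok (r : role) : Prop :=
  match rstate r with
  | None => True
  | Some (i, p0, p1) =>
      (exists k, 1 <= i /\
         nth_error (rtrace r) (i - 1) = Some (Rcv (st_msg p0 k)) /\
         nth_error (rtrace r) i = Some (Snd (st_msg p1 k))) /\
      (p1 = s0 \/ p1 = p0 \/
       exists esk k t, is_key esk /\ is_key k /\ r = extend_role esk k p0 t)
  end.

Definition protocol_ok (Pi : role -> Prop) : Prop :=
  (forall r, adversary_role r -> Pi r) /\
  (forall esk k p t, is_key esk -> is_key k -> Pi (extend_role esk k p t)) /\
  (forall r, Pi r -> role_ok r).

Definition run_of (Pi : role -> Prop) (B : bundle) : Prop :=
  forall s, exists r, Pi r /\ prefix (Theta B s) (rtrace r).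

Definition annot (Pi : role -> Prop) (B : bundle) (n : node) (p0 p1 : msg) : Prop :=
  is_node B n /\
  exists r, Pi r /\ prefix (Theta B (fst n)) (rtrace r) /\
            rstate r = Some (snd n, p0, p1).

Definition annotated (Pi : role -> Prop) (B : bundle) (n : node) : Prop :=
  exists p0 p1, annot Pi B n p0 p1.

Definition ann_rel (p0 p1 : msg) (m0 m1 : state) : Prop :=
  p0 = pcr m0 /\ p1 = pcr m1 /\ leadsto m0 m1.

Definition compatible (Pi : role -> Prop) (B : bundle) : Prop :=
  exists (l : nat) (f : node -> nat) (pi : nat -> state),
    is_path pi /\
    (forall n, annotated Pi B n -> f n < l) /\
    (forall n n', annotated Pi B n -> annotated Pi B n' -> f n = f n' -> n = n') /\
    (forall j, j < l -> exists n, annotated Pi B n /\ f n = j) /\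
    (forall n0 n1, annotated Pi B n0 -> annotated Pi B n1 ->
        (prec B n0 n1 <-> f n0 < f n1)) /\
    (forall n p0 p1, annot Pi B n p0 p1 -> ann_rel p0 p1 (pi (f n)) (pi (S (f n)))).

Definition htin (B : bundle) (z : strand) (h : nat) (c : trace) : Prop :=
  h <= length (Theta B z) /\ prefix (Theta B z) c.

(* Main.v *)
Require Import Defs.
From Stdlib Require Import List Arith Relations Lia.
Import ListNotations.

Lemma pcr_inj : forall m m', pcr m = pcr m' -> m = m'.
Proof.
  induction m; destruct m'; simpl; intro H; try discriminate; auto.
  inversion H; subst. f_equal. auto.
Qed.

Fixpoint msize (x : msg) : nat :=
  match x with
  | Pair a b => S (msize a + msize b)
  | Enc a b => S (msize a + msize b)
  | Hash a => S (msize a)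
  | _ => 1
  end.

Lemma hash_neq : forall t x, Hash (Pair t x) <> x.
Proof. intros t x H. assert (msize (Hash (Pair t x)) = msize x) by (rewrite H; auto).
  simpl in H0. lia. Qed.

Lemma path_lemma (pi : nat -> state) (Hp : forall i, leadsto (pi i) (pi (S i))) a :
  forall d t, has_msg (pi (a + d)) t ->
   state_sub (pi a) (pi (a + d)) \/ exists j, a <= j < a + d /\ pi (S j) = ex t (pi j).
Proof.
  induction d; intros t Ht.
  - left. rewrite Nat.add_0_r. constructor.
  - rewrite Nat.add_succ_r in *. destruct (Hp (a + d)) as [E|[[t' E]|E]].
    + rewrite E in Ht. destruct Ht as [m' Hs]. inversion Hs.
    + rewrite E in Ht |- *. destruct Ht as [m' Hs]. inversion Hs; subst.
      * right. exists (a + d). split; [lia|]. rewrite E. congruence.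
      * destruct (IHd t) as [H|[j [Hj1 Hj2]]].
        -- exists m'. assumption.
        -- left. apply sub_ex. assumption.
        -- right. exists j. split; [lia|assumption].
    + rewrite <- E in Ht |- *. destruct (IHd t Ht) as [H|[j [Hj1 Hj2]]].
      * left; assumption.
      * right. exists j. split; [lia|assumption].
Qed.

Lemma htin_eq B z esk k p t : htin B z 2 (extend esk k p t) -> Theta B z = extend esk k p t.
Proof.
  intros [Hl [r Hr]]. assert (length (extend esk k p t) = length (Theta B z) + length r)
    by (rewrite Hr; apply length_app).
  simpl in H. assert (r = []) by (apply length_zero_iff_nil; lia). subst.
  rewrite app_nil_r in Hr. auto.
Qed.

Lemma ext_annot Pi B z esk k p t : protocol_ok Pi -> is_key esk -> is_key k ->
  htin B z 2 (extend esk k p t) -> annot Pi B (z, 1) p (Hash (Pair t p)).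
Proof.
  intros [_ [HP _]] He Hk Hh. pose proof (htin_eq _ _ _ _ _ _ Hh) as E.
  split.
  - unfold is_node. simpl. rewrite E. simpl. lia.
  - exists (extend_role esk k p t). split; [auto|]. split.
    + simpl. rewrite E. exists []. rewrite app_nil_r. auto.
    + reflexivity.
Qed.

Lemma prec_into1 B z esk k p t a : is_bundle B -> htin B z 2 (extend esk k p t) ->
  prec B a (z, 1) -> a = (z, 0) \/ prec B a (z, 0).
Proof.
  intros [_ [Hc _]] Hh Hpr. pose proof (htin_eq _ _ _ _ _ _ Hh) as E.
  apply clos_trans_tn1 in Hpr. inversion Hpr; subst.
  - destruct H as [H|[H1 [H2 _]]].
    + destruct (Hc _ _ H) as [t' [_ Ht']]. unfold ev in Ht'. simpl in Ht'.
      rewrite E in Ht'. simpl in Ht'. discriminate.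
    + left. destruct a; simpl in *. subst. inversion H2; auto.
  - destruct H as [H|[H1 [H2 _]]].
    + destruct (Hc _ _ H) as [t' [_ Ht']]. unfold ev in Ht'. simpl in Ht'.
      rewrite E in Ht'. simpl in Ht'. discriminate.
    + right. destruct y; simpl in *. subst. inversion H2; subst.
      apply clos_tn1_trans. auto.
Qed.

Lemma prec01 B z esk k p t : htin B z 2 (extend esk k p t) -> prec B (z, 0) (z, 1).
Proof.
  intros Hh. pose proof (htin_eq _ _ _ _ _ _ Hh) as E.
  apply t_step. right. unfold succ_edge, is_node. simpl. rewrite E. simpl. auto.
Qed.

Theorem theorem1 (Pi : role -> Prop) (B : bundle) :
  protocol_ok Pi -> is_bundle B -> run_of Pi B -> compatible Pi B ->
  forall (z0 z1 : strand) (t t0 t1 : msg) (m0 m1 : state) (esk0 esk1 k0 k1 : msg),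
    is_key esk0 -> is_key esk1 -> is_key k0 -> is_key k1 ->
    htin B z0 2 (extend esk0 k0 (pcr m0) t0) ->
    htin B z1 2 (extend esk1 k1 (pcr m1) t1) ->
    prec B (z0, 1) (z1, 0) ->
    has_msg m1 t ->
    state_sub (ex t0 m0) m1 \/
    exists (z : strand) (m : state) (esk k : msg),
      is_key esk /\ is_key k /\
      htin B z 2 (extend esk k (pcr m) t) /\
      prec B (z0, 1) (z, 0) /\ prec B (z, 1) (z1, 0).
Proof.
  intros HPi HB Hrun Hcomp z0 z1 t t0 t1 m0 m1 esk0 esk1 k0 k1 He0 He1 Hk0 Hk1 Hh0 Hh1 Hpr Hhas.
  destruct Hcomp as (l & f & pi & [Hpi0 Hpath] & Hfl & Hfinj & Hfsurj & Hprec & Hann).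
  pose proof (ext_annot _ _ _ _ _ _ _ HPi He0 Hk0 Hh0) as A0.
  pose proof (ext_annot _ _ _ _ _ _ _ HPi He1 Hk1 Hh1) as A1.
  assert (An0 : annotated Pi B (z0, 1)) by (do 2 eexists; eauto).
  assert (An1 : annotated Pi B (z1, 1)) by (do 2 eexists; eauto).
  destruct (Hann _ _ _ A0) as [Q1 [Q2 _]].
  destruct (Hann _ _ _ A1) as [R1 [R2 _]].
  apply pcr_inj in Q1. apply pcr_inj in R1.
  assert (Q2' : pi (S (f (z0, 1))) = ex t0 m0) by (apply pcr_inj; simpl; congruence).
  assert (Hp01 : prec B (z0, 1) (z1, 1)) by (eapply t_trans; [exact Hpr | eapply prec01; eauto]).
  apply (Hprec _ _ An0 An1) in Hp01.
  set (a := S (f (z0, 1))).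
  assert (Ed : f (z1, 1) = a + (f (z1, 1) - a)) by (unfold a; lia).
  rewrite R1 in Hhas. rewrite Ed in Hhas.
  destruct (path_lemma pi Hpath a _ _ Hhas) as [H|[j [Hj1 Hj2]]].
  - left. rewrite <- Ed in H. unfold a in H. rewrite Q2' in H. rewrite R1. exact H.
  - right. assert (Hjl : j < l) by (pose proof (Hfl _ An1); lia).
    destruct (Hfsurj j Hjl) as [n [Ann Hfn]].
    destruct Ann as [p0 [p1 Anp]].
    destruct (Hann _ _ _ Anp) as [S1 [S2 _]].
    rewrite Hfn, Hj2 in S2. simpl in S2. rewrite Hfn in S1.
    pose proof Anp as [Hnode [r [Hr [Hpre Hrs]]]].
    destruct HPi as [_ [_ Hok]]. pose proof (Hok r Hr) as Rok.
    unfold role_ok in Rok. rewrite Hrs in Rok.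
    destruct Rok as [_ [E|[E|(esk & k & t' & Hesk & Hk & Er)]]].
    + subst p1. discriminate.
    + subst p1. subst p0. exfalso. eapply hash_neq. symmetry. eauto.
    + subst r. simpl in Hrs. inversion Hrs as [[Esn Ep1]].
      destruct n as [zn sn]. simpl in *. subst sn.
      assert (Et : t' = t) by congruence. subst t'.
      assert (Hh : htin B zn 2 (extend esk k (pcr (pi (f (zn, 1)))) t)).
      { split; [unfold is_node in Hnode; simpl in Hnode; lia|]. subst; exact Hpre. }
      exists zn, (pi (f (zn, 1))), esk, k. split; [auto|]. split; [auto|]. split; [auto|].
      assert (An : annotated Pi B (zn, 1)) by (do 2 eexists; eauto).
      split.
      * assert (P : prec B (z0, 1) (zn, 1)) by (apply (Hprec _ _ An0 An); unfold a in Hj1; lia).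
        destruct (prec_into1 _ _ _ _ _ _ _ HB Hh P) as [E|E]; [discriminate|auto].
      * assert (P : prec B (zn, 1) (z1, 1)) by (apply (Hprec _ _ An An1); lia).
        destruct (prec_into1 _ _ _ _ _ _ _ HB Hh1 P) as [E|E]; [discriminate|auto].
Qed.
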